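(* Let $G$ be a finite group and let $\mathcal{C}$ be a cycle of $\mathcal{P}(G)$. Then there exists a cycle $\mathcal{C}'$ of $\mathcal{P}(G)$ whose vertex set contains that of $\mathcal{C}$ and such that $[x]_{\mathtt{N}}\subseteq V_{\mathcal{C}'}$ for every $x\in V_{\mathcal{C}'}$.
   Context: The power graph $\mathcal{P}(G)$ has vertex set $G$, and distinct $x,y$ are adjacent iff one is a positive integer power of the other. $N[x]$ is the closed neighbourhood of $x$ in $\mathcal{P}(G)$; $x\mathtt{N}y$ iff $N[x]=N[y]$, with class $[x]_{\mathtt{N}}$. A cycle is a subgraph whose $k\ge3$ distinct vertices can be arranged cyclically with consecutive vertices adjacent; $V_{\mathcal{C}}$ is its vertex set. *)

(* Defs.v *)
From mathcomp Require Import all_boot all_fingroup.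
Set Implicit Arguments. Unset Strict Implicit. Unset Printing Implicit Defensive.
Local Open Scope group_scope.

Definition is_pos_power (gT : finGroupType) (x y : gT) : Prop :=
  exists n : nat, (0 < n)%N /\ y = x ^+ n.

Definition pg_adj (gT : finGroupType) (x y : gT) : Prop :=
  x <> y /\ (is_pos_power x y \/ is_pos_power y x).

Definition closed_nbhd (gT : finGroupType) (x : gT) : gT -> Prop :=
  fun z => z = x \/ pg_adj x z.

(* x N y  iff  N[x] = N[y] ; the class [x]_N is {y | x N y} *)
Definition N_rel (gT : finGroupType) (x y : gT) : Prop :=
  forall z, closed_nbhd x z <-> closed_nbhd y z.

(* a cycle of P(G), given by the cyclic sequence of its (distinct) vertices;
   its vertex set is the set of entries of the sequence *)
Definition pg_cycle (gT : finGroupType) (s : seq gT) : Prop :=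
  uniq s /\ (3 <= size s)%N /\
  forall i, (i < size s)%N ->
    pg_adj (nth 1 s i) (nth 1 s (i.+1 %% size s)).

(* Main.v *)
Require Import Defs.
From mathcomp Require Import all_boot all_fingroup.
From Stdlib Require Import Classical.
From mathcomp Require Import zify.

Local Open Scope group_scope.
Section Aux.
Variable gT : finGroupType.
Implicit Types x y z : gT.

Lemma adj_sym x y : pg_adj x y -> pg_adj y x.
Proof. case=> H [H1|H1]; split; [by move=> E; apply H | by right | by move=> E; apply H | by left]. Qed.

Lemma nrel_adj x y : N_rel x y -> x <> y -> pg_adj x y.
Proof. move=> H ne; have [] := (proj2 (H y)) (or_introl erefl) => //. by move=> E; case: ne. Qed.

Lemma nrel_adj2 x y z : N_rel x y -> pg_adj x z -> z <> y -> pg_adj y z.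
Proof. move=> H a ne; have [] := (proj1 (H z)) (or_intror a) => //. Qed.

Lemma nth_rcons_rot (s : seq gT) x i : i < (size s).+1 ->
  nth 1 (rcons s x) i = nth 1 (x :: s) (i.+1 %% (size s).+1).
Proof.
move=> lt; rewrite nth_rcons; case: (ltngtP i (size s)) lt => //.
- by move=> lt _; rewrite modn_small.
- by move=> a; rewrite ltnS leqNgt a.
by move=> -> _; rewrite modnn.
Qed.

Lemma cycle_rot1 (s : seq gT) x : pg_cycle (x :: s) -> pg_cycle (rcons s x).
Proof.
case=> U [S A]; split; first by rewrite rcons_uniq.
rewrite size_rcons; split=> // i lt.
rewrite (@nth_rcons_rot s x i lt) nth_rcons_rot; last by rewrite ltn_mod.
exact: A (ltn_mod _ _).
Qed.

Lemma iter_rot1 (s1 t : seq gT) : iter (size s1) (rot 1) (s1 ++ t) = t ++ s1.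
Proof.
elim: s1 t => [|a s1 IH] t; first by rewrite cats0.
by rewrite cat_cons [size _]/= iterSr rot1_cons rcons_cat IH cat_rcons.
Qed.

Lemma cycle_iter k (s : seq gT) : pg_cycle s -> pg_cycle (iter k (rot 1) s).
Proof.
elim: k => //= k IH /IH; case: (iter k (rot 1) s) => [|a t]; last by rewrite rot1_cons; exact: cycle_rot1.
by case=> _ [].
Qed.

Lemma mem_iter k (s : seq gT) : iter k (rot 1) s =i s.
Proof. elim: k => //= k IH z; by rewrite mem_rot IH. Qed.

Lemma extend (s : seq gT) x y : pg_cycle (rcons s x) -> y \notin rcons s x ->
  N_rel x y -> pg_cycle (rcons (rcons s x) y).
Proof.
case=> U [S A] ny H; split; first by rewrite rcons_uniq ny U.
rewrite !size_rcons in S A *; split; first by apply: leq_trans S _.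
move=> i lt.
have nexy : x <> y by move=> E; move: ny; rewrite -E mem_rcons mem_head.
have [lt1|ge1] := ltnP i (size s).+1.
- rewrite nth_rcons size_rcons lt1.
  have [lt2|ge2] := ltnP i (size s).
  + have := A i (leqW lt2).
    rewrite (modn_small (m:=i.+1) (d:=(size s).+1)); last by lia.
    rewrite (modn_small (m:=i.+1) (d:=(size s).+2)); last by lia.
    by rewrite [X in _ -> pg_adj _ X]nth_rcons nth_rcons size_rcons ltnS lt2.
  + have E : i = size s by apply/eqP; rewrite eqn_leq ge2 -ltnS lt1.
    subst i; rewrite nth_rcons ltnn eqxx modn_small //.
    rewrite nth_rcons size_rcons ltnn eqxx.
    exact: nrel_adj.
- have E : i = (size s).+1 by apply/eqP; rewrite eqn_leq ge1 -ltnS lt.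
  subst i.
  rewrite modnn nth_rcons size_rcons ltnn eqxx.
  have := A (size s) (ltnSn _); rewrite modnn nth_rcons ltnn eqxx => a.
  rewrite nth_rcons size_rcons /=.
  apply: nrel_adj2 H a _ => E.
  move: ny; rewrite -E mem_nth //. by rewrite size_rcons.
Qed.

End Aux.

Theorem mainTheorem6 (gT : finGroupType) (C : seq gT) :
  pg_cycle C ->
  exists C' : seq gT,
    pg_cycle C' /\
    {subset C <= C'} /\
    (forall x, x \in C' -> forall y, N_rel x y -> y \in C').
Proof.
move=> HC.
have Hsz : size C <= #|gT|.
  by case: HC => U _; rewrite -(card_uniqP U) max_card.
move: {2}(#|gT| - size C) (leqnn (#|gT| - size C)) => k.
elim: k C HC Hsz => [|k IH] C HC Hsz Hk.
- exists C; split=> //; split=> // x xC y H.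
  case: (boolP (y \in C)) => // ny; exfalso.
  case: HC => U _.
  have U' : uniq (y :: C) by rewrite /= ny U.
  have := max_card (mem (y :: C)); rewrite (card_uniqP U') /=.
  move=> X; move: Hk; rewrite leqn0 subn_eq0 => Hk. by have := leq_trans X Hk; rewrite ltnn.
- case: (classic (exists x y, x \in C /\ y \notin C /\ N_rel x y)); last first.
    move=> NE; exists C; split=> //; split=> // x xC y H.
    case: (boolP (y \in C)) => // ny; exfalso; apply: NE; by exists x, y.
  case=> x [y [xC [ny H]]].
  case/splitPr: xC HC ny Hsz Hk => s1 s2 HC ny Hsz Hk.
  have HC1 := @cycle_iter _ (size s1).+1 _ HC.
  have M1 := mem_iter _ (size s1).+1 (s1 ++ x :: s2).
  rewrite iterS iter_rot1 rot1_cons in HC1 M1.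
  have ny' : y \notin rcons (s2 ++ s1) x by rewrite M1.
  have HC2 := @extend _ _ _ _ HC1 ny' H.
  have S1 : size (rcons (rcons (s2 ++ s1) x) y) <= #|gT|.
    case: HC2 => U _; rewrite -(card_uniqP U); exact: max_card.
  have S2 : #|gT| - size (rcons (rcons (s2 ++ s1) x) y) <= k.
    rewrite !size_rcons size_cat; move: Hk; rewrite size_cat /=. lia.
  have [C' [P1 [P2 P3]]] := IH _ HC2 S1 S2.
  exists C'; split=> //; split=> // z zC; apply: P2.
  by rewrite mem_rcons inE M1 zC orbT.
Qed.
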